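(* Let $\mathcal V$ be a complex vector space, $\Omega\subseteq\mathcal V_{\mathrm{nc}}$ a finitely open nc set, $\mathcal W$ a complex Banach space with an admissible system of matrix norms, $f:\Omega\to\mathcal W_{\mathrm{nc}}$ a G-differentiable nc function, $s\in\mathbb N$ and $Y\in\Omega_s$. Suppose that $$f(X)=\sum_{\ell=0}^\infty\Bigl(X-\bigoplus_{\alpha=1}^mY\Bigr)^{\odot_s\ell}f_\ell\qquad(X\in\Gamma\cap\mathcal V^{sm\times sm},\ m=1,2,\dots),$$ where $\Gamma$ is a finitely open subset of $\Omega$ which contains $\bigoplus_{\alpha=1}^mY$ for every $m\in\mathbb N$, and $f_\ell:(\mathcal V^{s\times s})^\ell\to\mathcal W^{s\times s}$ is $\ell$-linear for each $\ell=0,1,\dots$. Then $f_\ell=\Delta_R^\ell f(Y,\dots,Y)$ ($\ell+1$ arguments) for every $\ell$.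
   Context: $\mathcal V_{\mathrm{nc}}=\coprod_n\mathcal V^{n\times n}$; complex matrices act on matrices over $\mathcal V,\mathcal W$ by multiplication; $X\oplus Y=\begin{bmatrix}X&0\\0&Y\end{bmatrix}$. A nc set is a subset closed under direct sums, $\Omega_n=\Omega\cap\mathcal V^{n\times n}$; a nc function satisfies $f(\Omega_n)\subseteq\mathcal W^{n\times n}$, $f(X\oplus Y)=f(X)\oplus f(Y)$, $f(SXS^{-1})=Sf(X)S^{-1}$ for invertible $S\in\mathbb C^{n\times n}$ with $X,SXS^{-1}\in\Omega_n$. A subset of $\mathcal V_{\mathrm{nc}}$ is finitely open if its intersection with every finite-dimensional subspace $\mathcal U$ of any $\mathcal V^{n\times n}$ is Euclidean-open in $\mathcal U$. An admissible system of matrix norms over $\mathcal W$ is a sequence of norms $\|\cdot\|_n$ on $\mathcal W^{n\times n}$ with constants $C_1(n,m),C_1'(n,m),C_2(n)>0$ such that $C_1(n,m)^{-1}\max\{\|X\|_n,\|Y\|_m\}\le\|X\oplus Y\|_{n+m}\le C_1'(n,m)\max\{\|X\|_n,\|Y\|_m\}$ and $\|SXT\|_n\le C_2(n)\|S\|\|X\|_n\|T\|$. $f$ is G-differentiable if $\lim_{t\to0}(f(X+tZ)-f(X))/t$ exists in $\mathcal W^{n\times n}$ for all $X\in\Omega_n$, $Z\in\mathcal V^{n\times n}$. For $W\in\mathcal V^{sm\times sm}$ viewed as an $m\times m$ matrix of blocks $W_{ij}\in\mathcal V^{s\times s}$, $W^{\odot_s\ell}$ is the $m\times m$ matrix over $(\mathcal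 V^{s\times s})^{\otimes\ell}$ with $(i,k)$ entry $\sum_{j_1,\dots,j_{\ell-1}}W_{ij_1}\otimes\cdots\otimes W_{j_{\ell-1}k}$, $W^{\odot_s\ell}f_\ell\in\mathcal W^{sm\times sm}$ applies $f_\ell$ entrywise, and $W^{\odot_s0}f_0=\bigoplus_{\alpha=1}^mf_0$; the series converges in norm. Higher order operators: finitely open nc sets are right admissible; with $\tilde\Omega=\{SXS^{-1}\}$ and $\tilde f(SXS^{-1})=Sf(X)S^{-1}$ the unique nc extension, for $X^j\in\Omega_{n_j}$, $Z^j\in\mathcal V^{n_{j-1}\times n_j}$, the block upper bidiagonal matrix $B$ with diagonal $X^0,\dots,X^\ell$ and superdiagonal $Z^1,\dots,Z^\ell$ lies in $\tilde\Omega$ and $\Delta_R^\ell f(X^0,\dots,X^\ell)(Z^1,\dots,Z^\ell)$ is the $(1,\ell+1)$ block of $\tilde f(B)$ ($\Delta_R^0f=f$). *)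

(* Defs.v *)
From HB Require Import structures.
From mathcomp Require Import all_boot all_order all_algebra.
From mathcomp Require Import complex.
From mathcomp Require Import all_classical all_reals all_analysis.
Set Implicit Arguments. Unset Strict Implicit. Unset Printing Implicit Defensive.
Import Order.TTheory GRing.Theory Num.Theory ComplexField.
Local Open Scope ring_scope.

Section NCDefs.
Variable R : realType.
Local Notation C := (R[i]).

(* size of an (m x m)-block matrix with (s x s) blocks: s*m *)
Definition bsz (m s : nat) : nat := (\sum_(a < m) s)%N.

Definition smulmx (U : lmodType C) (m n p : nat) (S : 'M[C]_(m, n))
  (X : 'M[U]_(n, p)) : 'M[U]_(m, p) :=
  \matrix_(i, j) \sum_(k < n) S i k *: X k j.
Definition mulmxs (U : lmodType C) (m n p : nat) (X : 'M[U]_(m, n))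
  (T : 'M[C]_(n, p)) : 'M[U]_(m, p) :=
  \matrix_(i, j) \sum_(k < n) T k j *: X i k.
Definition scalemxl (U : lmodType C) (m n : nat) (a : C) (X : 'M[U]_(m, n))
  : 'M[U]_(m, n) := map_mx (fun x => a *: x) X.
Definition simil (U : lmodType C) (n : nat) (S : 'M[C]_n) (X : 'M[U]_n)
  : 'M[U]_n := smulmx S (mulmxs X (invmx S)).

Definition dsum (U : zmodType) (n m : nat) (X : 'M[U]_n) (Y : 'M[U]_m)
  : 'M[U]_(n + m) := block_mx X 0 0 Y.

Definition dsumn (U : zmodType) (m s : nat) (Y : 'M[U]_s) : 'M[U]_(bsz m s) :=
  @mxdiag U m (fun=> s) (fun=> Y).

Definition blk (U : Type) (m s : nat) (X : 'M[U]_(bsz m s)) (a b : 'I_m)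
  : 'M[U]_s := @submxblock U m m (fun=> s) (fun=> s) X a b.

(* subsets of U_nc = coprod_n U^{n x n} *)
Definition ncsubset (U : Type) := forall n : nat, set 'M[U]_n.

Definition is_ncset (U : zmodType) (O : ncsubset U) : Prop :=
  forall n m (X : 'M[U]_n) (Y : 'M[U]_m), (0 < n)%N -> (0 < m)%N ->
    O n X -> O m Y -> O (n + m)%N (dsum X Y).

(* finitely open: the intersection with every finite-dimensional subspace
   of U^{n x n} is Euclidean open in it; written out in coordinates
   X + sum_i t_i Z_i with respect to a finite spanning family Z *)
Definition finitely_open (U : lmodType C) (O : ncsubset U) : Prop :=
  forall n (X : 'M[U]_n) (k : nat) (Z : 'I_k -> 'M[U]_n), (0 < n)%N ->
    O n X -> exists eps : C, 0 < eps /\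
      forall t : 'I_k -> C, (forall i, `|t i| < eps) ->
        O n (X + \sum_(i < k) scalemxl (t i) (Z i)).

Definition is_ncfun (U Wt : lmodType C) (O : ncsubset U)
  (f : forall n, 'M[U]_n -> 'M[Wt]_n) : Prop :=
  (forall n m (X : 'M[U]_n) (Y : 'M[U]_m), (0 < n)%N -> (0 < m)%N ->
     O n X -> O m Y -> f (n + m)%N (dsum X Y) = dsum (f n X) (f m Y)) /\
  (forall n (S : 'M[C]_n) (X : 'M[U]_n), (0 < n)%N -> S \in unitmx ->
     O n X -> O n (simil S X) -> f n (simil S X) = simil S (f n X)).

(* a norm (values in C, necessarily real and nonnegative) *)
Definition is_norm (U : lmodType C) (n : nat) (nu : 'M[U]_n -> C) : Prop :=
  (forall x, 0 <= nu x) /\ (forall x, nu x = 0 -> x = 0) /\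
  (forall a x, nu (scalemxl a x) = `|a| * nu x) /\
  (forall x y, nu (x + y) <= nu x + nu y).

(* a norm on C^{n x n} (all such norms are equivalent) *)
Definition cmxnorm (n : nat) (S : 'M[C]_n) : C :=
  \sum_(i < n) \sum_(j < n) `|S i j|.

Definition admissible (Wt : lmodType C) (N : forall n, 'M[Wt]_n -> C) : Prop :=
  (forall n, (0 < n)%N -> is_norm (N n)) /\
  (forall n m, (0 < n)%N -> (0 < m)%N -> exists c1 c1' : C, 0 < c1 /\ 0 < c1' /\
     forall (X : 'M[Wt]_n) (Y : 'M[Wt]_m),
       c1^-1 * Num.max (N n X) (N m Y) <= N (n + m)%N (dsum X Y) /\
       N (n + m)%N (dsum X Y) <= c1' * Num.max (N n X) (N m Y)) /\
  (forall n, (0 < n)%N -> exists c2 : C, 0 < c2 /\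
     forall (S T : 'M[C]_n) (X : 'M[Wt]_n),
       N n (smulmx S (mulmxs X T)) <= c2 * cmxnorm S * N n X * cmxnorm T).

Definition G_differentiable (U Wt : lmodType C) (O : ncsubset U)
  (f : forall n, 'M[U]_n -> 'M[Wt]_n) (N : forall n, 'M[Wt]_n -> C) : Prop :=
  forall n (X Z : 'M[U]_n), (0 < n)%N -> O n X ->
    exists D : 'M[Wt]_n, forall eps : C, 0 < eps -> exists delta : C,
      0 < delta /\ forall t : C, t != 0 -> `|t| < delta -> O n (X + scalemxl t Z) ->
        N n (scalemxl t^-1 (f n (X + scalemxl t Z) - f n X) - D) < eps.

Definition multilinear (U Wt : lmodType C) (s l : nat)
  (g : ('I_l -> 'M[U]_s) -> 'M[Wt]_s) : Prop :=
  forall (i : 'I_l) (x : 'I_l -> 'M[U]_s) (a : C) (u v : 'M[U]_s),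
    g (fun j => if j == i then scalemxl a u + v else x j) =
    scalemxl a (g (fun j => if j == i then u else x j)) +
    g (fun j => if j == i then v else x j).

(* W^{(.)_s l} f_l : the (a,b) block is
   sum_{j_1..j_{l-1}} f_l(W_{a j_1}, W_{j_1 j_2}, ..., W_{j_{l-1} b});
   for l = 0 this gives (+)_{alpha=1}^m f_0 *)
Definition odot_apply (U Wt : lmodType C) (m s l : nat)
  (Wm : 'M[U]_(bsz m s)) (fl : ('I_l -> 'M[U]_s) -> 'M[Wt]_s)
  : 'M[Wt]_(bsz m s) :=
  @mxblock Wt m m (fun=> s) (fun=> s) (fun a b =>
    \sum_(p : {ffun 'I_l.+1 -> 'I_m} | (p ord0 == a) && (p ord_max == b))
      fl (fun t : 'I_l => blk Wm (p (widen_ord (leqnSn l) t)) (p (lift ord0 t)))).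

(* the block upper bidiagonal matrix with diagonal Y,...,Y (l+1 times) and
   superdiagonal Z_1, ..., Z_l *)
Definition bidiag (U : zmodType) (s l : nat) (Y : 'M[U]_s)
  (Z : 'I_l -> 'M[U]_s) : 'M[U]_(bsz l.+1 s) :=
  @mxblock U l.+1 l.+1 (fun=> s) (fun=> s) (fun a b =>
    if b == a then Y
    else if (b == a.+1 :> nat) then
      (if (insub (a : nat) : option 'I_l) is Some i then Z i else 0)
    else 0).

End NCDefs.

(* Main.v *)
Require Import Defs.
From HB Require Import structures.
From mathcomp Require Import all_boot all_order all_algebra.
From mathcomp Require Import complex.
From mathcomp Require Import all_classical all_reals all_analysis.
From mathcomp Require Import ring.
Import Order.TTheory GRing.Theory Num.Theory ComplexField.
Local Open Scope ring_scope.

Lemma smulmxA (R : realType) (U : lmodType R[i]) m n p q (P : 'M[R[i]]_(m,n))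
  (S : 'M[R[i]]_(n,p)) (X : 'M[U]_(p,q)) :
  smulmx P (smulmx S X) = smulmx (P *m S) X.
Proof.
apply/matrixP => i j; rewrite !mxE.
under eq_bigr do rewrite mxE scaler_sumr.
rewrite exchange_big /=; apply: eq_bigr => r _.
rewrite mxE scaler_suml; apply: eq_bigr => k _; by rewrite scalerA.
Qed.

Lemma mulmxsA (R : realType) (U : lmodType R[i]) m n p q (X : 'M[U]_(m,n))
  (T1 : 'M[R[i]]_(n,p)) (T2 : 'M[R[i]]_(p,q)) :
  mulmxs (mulmxs X T1) T2 = mulmxs X (T1 *m T2).
Proof.
apply/matrixP => i j; rewrite !mxE.
under eq_bigr do rewrite mxE scaler_sumr.
rewrite exchange_big /=; apply: eq_bigr => r _.
rewrite mxE scaler_suml; apply: eq_bigr => k _; by rewrite scalerA mulrC.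
Qed.

Lemma smulmxsC (R : realType) (U : lmodType R[i]) m n p q (S : 'M[R[i]]_(m,n))
  (X : 'M[U]_(n,p)) (T : 'M[R[i]]_(p,q)) :
  smulmx S (mulmxs X T) = mulmxs (smulmx S X) T.
Proof.
apply/matrixP => i j; rewrite !mxE.
under eq_bigr do rewrite mxE scaler_sumr.
under [RHS]eq_bigr do rewrite mxE scaler_sumr.
rewrite exchange_big /=; apply: eq_bigr => r _.
apply: eq_bigr => k _; by rewrite !scalerA mulrC.
Qed.

Lemma invmxM' (R : realType) n (P S : 'M[R[i]]_n) :
  P \in unitmx -> S \in unitmx -> invmx (P *m S) = invmx S *m invmx P.
Proof.
move=> uP uS.
have uPS : P *m S \in unitmx by rewrite unitmx_mul uP uS.
have e : (P *m S) *m (invmx S *m invmx P) = 1%:M.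
  by rewrite mulmxA -(mulmxA P) mulmxV // mulmx1 mulmxV.
by rewrite -[RHS](mulKmx uPS) e mulmx1.
Qed.

Lemma simil_comp (R : realType) (U : lmodType R[i]) n (P S : 'M[R[i]]_n)
  (X : 'M[U]_n) : P \in unitmx -> S \in unitmx ->
  simil P (simil S X) = simil (P *m S) X.
Proof.
move=> uP uS; rewrite /simil invmxM' //.
by rewrite -[mulmxs (smulmx _ _) _]smulmxsC smulmxA mulmxsA.
Qed.

Definition dmx (R : realType) n (d : 'I_n -> R[i]) : 'M[R[i]]_n :=
  \matrix_(i, j) if i == j then d i else 0.
Arguments dmx {R n} d.

Lemma smulmx_dmx (R : realType) (U : lmodType R[i]) n p (d : 'I_n -> R[i])
  (X : 'M[U]_(n,p)) : smulmx (dmx d) X = \matrix_(i,j) (d i *: X i j).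
Proof.
apply/matrixP => i j; rewrite !mxE (bigD1 i) //= mxE eqxx big1 ?addr0 //.
by move=> k /negbTE ki; rewrite mxE eq_sym ki scale0r.
Qed.

Lemma mulmxs_dmx (R : realType) (U : lmodType R[i]) n p (d : 'I_p -> R[i])
  (X : 'M[U]_(n,p)) : mulmxs X (dmx d) = \matrix_(i,j) (d j *: X i j).
Proof.
apply/matrixP => i j; rewrite !mxE (bigD1 j) //= mxE eqxx big1 ?addr0 //.
by move=> k /negbTE ki; rewrite mxE ki scale0r.
Qed.

Lemma dmx_mul (R : realType) n (d e : 'I_n -> R[i]) :
  dmx d *m dmx e = dmx (fun i => d i * e i).
Proof.
apply/matrixP => i j; rewrite !mxE (bigD1 i) //= !mxE eqxx big1 ?addr0.
  by case: eqP => [->|]; rewrite ?mulr0.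
by move=> k /negbTE ki; rewrite mxE eq_sym ki mul0r.
Qed.

Lemma dmx_unit (R : realType) n (d : 'I_n -> R[i]) :
  (forall i, d i != 0) -> dmx d \in unitmx /\ invmx (dmx d) = dmx (fun i => (d i)^-1).
Proof.
move=> nz.
have e : dmx d *m dmx (fun i => (d i)^-1) = 1%:M.
  rewrite dmx_mul; apply/matrixP => i j; rewrite !mxE.
  by case: eqP => // _; rewrite mulfV.
have [u _] := mulmx1_unit e; split => //.
by rewrite -[RHS](mulKmx u) e mulmx1.
Qed.

Lemma simil_dmx (R : realType) (U : lmodType R[i]) n (d : 'I_n -> R[i])
  (X : 'M[U]_n) : (forall i, d i != 0) ->
  simil (dmx d) X = \matrix_(i,j) ((d i / d j) *: X i j).
Proof.
move=> nz; rewrite /simil; have [_ ->] := @dmx_unit R n d nz.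
rewrite mulmxs_dmx smulmx_dmx; apply/matrixP => i j; rewrite !mxE.
by rewrite scalerA.
Qed.

Definition bi (m s : nat) (k : 'I_(bsz m s)) : 'I_m := @tagnat.sig1 m (fun=> s) k.
Definition bj (m s : nat) (k : 'I_(bsz m s)) : 'I_s := @tagnat.sig2 m (fun=> s) k.
Definition rk (m s : nat) (a : 'I_m) (i : 'I_s) : 'I_(bsz m s) :=
  @tagnat.Rank m (fun=> s) a i.
Arguments bi {m s} k.
Arguments bj {m s} k.
Arguments rk {m s} a i.

Lemma bi_rk m s a i : bi (@rk m s a i) = a.
Proof. exact: tagnat.Rank1K. Qed.
Lemma bj_rk m s a i : bj (@rk m s a i) = i.
Proof. apply/val_inj; rewrite /bj /rk tagnat.Rank2K /=. by []. Qed.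
Lemma rkK m s k : rk (bi k) (bj k) = k :> 'I_(bsz m s).
Proof. exact: tagnat.sig2K. Qed.

Lemma blkE (U : Type) m s (H : 'M[U]_(bsz m s)) a b i j :
  blk H a b i j = H (rk a i) (rk b j).
Proof. by rewrite /blk /submxblock mxE. Qed.

Lemma entry_blk (U : Type) m s (H : 'M[U]_(bsz m s)) k l :
  H k l = blk H (bi k) (bi l) (bj k) (bj l).
Proof. by rewrite blkE !rkK. Qed.

Lemma mxblockE' (U : Type) m s (F : 'I_m -> 'I_m -> 'M[U]_s) k l :
  (@mxblock U m m (fun=> s) (fun=> s) F) k l = F (bi k) (bi l) (bj k) (bj l).
Proof. by rewrite mxE. Qed.

Lemma blk_mxblock (U : Type) m s (F : 'I_m -> 'I_m -> 'M[U]_s) a b :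
  blk (@mxblock U m m (fun=> s) (fun=> s) F) a b = F a b.
Proof. exact: mxblockK. Qed.

Lemma dsumnE (U : zmodType) m s (Y : 'M[U]_s) k l :
  (dsumn m Y) k l = if bi k == bi l then Y (bj k) (bj l) else 0.
Proof.
rewrite /dsumn /mxdiag mxE; rewrite -/(bi k) -/(bi l).
by case: eqP => _; rewrite ?conform_mx_id ?mxE.
Qed.

Lemma bidiagE (U : zmodType) s l (Y : 'M[U]_s) (Z : 'I_l -> 'M[U]_s) k k' :
  (bidiag Y Z) k k' =
  if bi k' == bi k then Y (bj k) (bj k')
  else if (bi k' == (bi k).+1 :> nat) then
     (if (insub (bi k : nat) : option 'I_l) is Some i then Z i (bj k) (bj k') else 0)
  else 0.
Proof.
rewrite /bidiag mxE -/(bi k) -/(bi k') -/(bj k) -/(bj k').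
case: eqP => _ //; case: eqP => _; last by rewrite mxE.
by case: insub => [i|]; rewrite ?mxE.
Qed.

Lemma bidiag_scale (R : realType) (V : lmodType R[i]) s l (Y : 'M[V]_s)
  (Z : 'I_l -> 'M[V]_s) (t : R[i]) : t != 0 ->
  simil (dmx (fun k => (t^-1) ^+ (bi k : nat))) (bidiag Y Z) =
  dsumn l.+1 Y + scalemxl t (bidiag 0 Z).
Proof.
move=> t0; rewrite simil_dmx; last by move=> k; rewrite expf_neq0 // invr_eq0.
apply/matrixP => k k'; rewrite [LHS]mxE [RHS]mxE dsumnE [X in _ + X]mxE !bidiagE.
case: eqP => [->|ne].
  by rewrite eqxx mulfV ?expf_neq0 ?invr_eq0 // scale1r mxE scaler0 addr0.
rewrite (_ : (bi k == bi k') = false); last by apply/negbTE/eqP => e; apply: ne.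
rewrite add0r; case: eqP => [->|_]; last by rewrite !scaler0.
congr (_ *: _); rewrite exprS invrM ?unitfE ?expf_neq0 ?invr_eq0 //.
by rewrite invrK mulrA mulfV ?expf_neq0 ?invr_eq0 // mul1r.
Qed.


Lemma scalemxlE (R : realType) (U : lmodType R[i]) m n a (X : 'M[U]_(m,n)) i j :
  scalemxl a X i j = a *: X i j.
Proof. by rewrite mxE. Qed.
Lemma scalemxl1 (R : realType) (U : lmodType R[i]) m n (X : 'M[U]_(m,n)) :
  scalemxl 1 X = X.
Proof. by apply/matrixP => i j; rewrite mxE scale1r. Qed.
Lemma scalemxl0 (R : realType) (U : lmodType R[i]) m n a :
  scalemxl a (0 : 'M[U]_(m,n)) = 0.
Proof. by apply/matrixP => i j; rewrite !mxE scaler0. Qed.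
Lemma scalemxlA (R : realType) (U : lmodType R[i]) m n a b (X : 'M[U]_(m,n)) :
  scalemxl a (scalemxl b X) = scalemxl (a * b) X.
Proof. by apply/matrixP => i j; rewrite !mxE scalerA. Qed.

Lemma ml_zero (R : realType) (U W : lmodType R[i]) s l
  (g : ('I_l -> 'M[U]_s) -> 'M[W]_s) i x :
  multilinear g -> x i = 0 -> g x = 0.
Proof.
move=> ml xi.
have ex : x = (fun j => if j == i then scalemxl 1 0 + 0 else x j).
  by apply: funext => j; case: eqP => [->|]; rewrite ?scalemxl0 ?addr0.
have := ml i x 1 0 0; rewrite -ex scalemxl1.
have -> : (fun j => if j == i then 0 else x j) = x.
  by apply: funext => j; case: eqP => [->|].
by move=> h; apply: (addrI (g x)); rewrite addr0 -h.
Qed.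

Lemma ml_scale (R : realType) (U W : lmodType R[i]) s l
  (g : ('I_l -> 'M[U]_s) -> 'M[W]_s) c x :
  multilinear g -> g (fun u => scalemxl c (x u)) = scalemxl (c ^+ l) (g x).
Proof.
move=> ml.
suff H : forall k, (k <= l)%N ->
  g (fun u => if (u < k)%N then scalemxl c (x u) else x u) = scalemxl (c ^+ k) (g x).
  rewrite -H //; congr g; apply: funext => u; by rewrite ltn_ord.
elim => [|k IH] hk.
  rewrite expr0 scalemxl1; congr g; by apply: funext.
pose i := Ordinal hk.
have := ml i (fun u => if (u < k)%N then scalemxl c (x u) else x u) c (x i) 0.
have -> : (fun j => if j == i then scalemxl c (x i) + 0
     else if (j < k)%N then scalemxl c (x j) else x j) =
   (fun u => if (u < k.+1)%N then scalemxl c (x u) else x u).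
  apply: funext => u; case: eqP => [->|ne]; first by rewrite addr0 /= ltnSn.
  rewrite [(u < k.+1)%N]ltnS [(u <= k)%N]leq_eqVlt.
  case: (eqVneq (val u) k) => [e|ne'] //=.
  by case: ne; apply/val_inj.
move=> ->; rewrite [g (fun j => if j == i then 0 else _)](@ml_zero _ _ _ _ _ g i) ?eqxx // addr0.
have -> : (fun j => if j == i then x i else if (j < k)%N then scalemxl c (x j) else x j) =
   (fun u => if (u < k)%N then scalemxl c (x u) else x u).
  apply: funext => u; case: eqP => [->|//]; by rewrite ltnn.
by rewrite IH ?(ltnW hk) // scalemxlA exprS.
Qed.

Lemma path_id j m (p : 'I_j.+1 -> 'I_m) : val (p ord0) = 0%N ->
  (forall u : 'I_j, val (p (lift ord0 u)) = (p (widen_ord (leqnSn j) u)).+1) ->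
  forall k : 'I_j.+1, val (p k) = k.
Proof.
move=> h0 hs [k hk]; elim: k hk => [|k IH] hk.
  by have -> : Ordinal hk = ord0 by apply/val_inj.
have hk' : (k < j)%N by [].
have -> : Ordinal hk = lift ord0 (Ordinal hk') by apply/val_inj.
rewrite hs.
have -> : widen_ord (leqnSn j) (Ordinal hk') = Ordinal (ltnW hk) by apply/val_inj.
by rewrite IH.
Qed.


Lemma blkEt (R : realType) (V : lmodType R[i]) s l (Z : 'I_l -> 'M[V]_s) t
  (a b : 'I_l.+1) :
  blk (scalemxl t (bidiag 0 Z)) a b =
  if (b == a.+1 :> nat) then
    (if (insub (val a) : option 'I_l) is Some i then scalemxl t (Z i) else 0)
  else 0.
Proof.
apply/matrixP => i j; rewrite blkE mxE bidiagE !bi_rk !bj_rk.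
case: eqP => [->|_].
  by rewrite ltn_eqF // !mxE scaler0.
case: eqP => _; last by rewrite mxE scaler0.
by case: insub => [i0|]; rewrite !mxE ?scaler0.
Qed.

Lemma odot_blk (R : realType) (V W : lmodType R[i]) s l (Z : 'I_l -> 'M[V]_s)
  t (fl : forall j, ('I_j -> 'M[V]_s) -> 'M[W]_s) :
  (forall j, multilinear (fl j)) -> forall j,
  blk (odot_apply (scalemxl t (bidiag 0 Z)) (fl j)) ord0 ord_max =
  if j == l then scalemxl (t ^+ l) (fl l Z) else 0.
Proof.
move=> ml j; rewrite /odot_apply blk_mxblock.
have tz : forall p : {ffun 'I_j.+1 -> 'I_l.+1},
   ~~ [forall u : 'I_j, val (p (lift ord0 u)) == (p (widen_ord (leqnSn j) u)).+1] ->
   fl j (fun u => blk (scalemxl t (bidiag 0 Z)) (p (widen_ord (leqnSn j) u))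
                   (p (lift ord0 u))) = 0.
  move=> p /forallPn [u /negbTE hu].
  by apply: (@ml_zero _ _ _ _ _ _ u); rewrite // blkEt hu.
have pid : forall p : {ffun 'I_j.+1 -> 'I_l.+1}, p ord0 == ord0 ->
   [forall u : 'I_j, val (p (lift ord0 u)) == (p (widen_ord (leqnSn j) u)).+1] ->
   forall k, val (p k) = k.
  move=> p /eqP h0 /forallP hs; apply: path_id; first by rewrite h0.
  by move=> u; apply/eqP.
case: (eqVneq j l) => [ejl|njl].
  subst j.
  rewrite (bigD1 [ffun u => u]) /=; last by rewrite !ffunE !eqxx.
  rewrite big1 ?addr0.
    rewrite -ml_scale //; congr (fl l); apply: funext => u.
    rewrite !ffunE blkEt /= /bump /= add1n eqxx.
    by rewrite valK.
  move=> p /andP[/andP[h0 hm] np].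
  have [allg|nallg] := boolP [forall u : 'I_l, val (p (lift ord0 u)) ==
                                 (p (widen_ord (leqnSn l) u)).+1]; last exact: tz.
  case/negP: np; apply/eqP/ffunP => k; apply/val_inj.
  by rewrite ffunE pid.
rewrite big1 // => p /andP[h0 hm].
have [allg|nallg] := boolP [forall u : 'I_j, val (p (lift ord0 u)) ==
                               (p (widen_ord (leqnSn j) u)).+1]; last exact: tz.
have := pid p h0 allg ord_max; rewrite (eqP hm) /= => e.
by case/eqP: njl.
Qed.


Lemma limit_blk (R : realType) (W : lmodType R[i]) (N : forall n, 'M[W]_n -> R[i])
  m s (F : 'M[W]_(bsz m s)) (A : nat -> 'M[W]_(bsz m s)) (a b : 'I_m) c K0 :
  admissible N -> (0 < bsz m s)%N ->
  (forall eps, 0 < eps -> exists K, forall k, (K <= k)%N -> N _ (F - A k) < eps) ->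
  (forall k, (K0 <= k)%N -> blk (A k) a b = c) -> blk F a b = c.
Proof.
move=> [hnorm [_ hc2]] n0 hlim hA.
pose P0 : 'M[R[i]]_(bsz m s) := dmx (fun k => if bi k == a then 1 else 0).
pose P1 : 'M[R[i]]_(bsz m s) := dmx (fun k => if bi k == b then 1 else 0).
pose Pr (H : 'M[W]_(bsz m s)) := smulmx P0 (mulmxs H P1).
have PrE : forall H, Pr H = \matrix_(k, l) ((if bi k == a then 1 else 0) *:
                      ((if bi l == b then 1 else 0) *: H k l)).
  move=> H; rewrite /Pr /P0 /P1 mulmxs_dmx smulmx_dmx.
  by apply/matrixP => k l; rewrite !mxE.
have Pr_blk : forall H H', blk H a b = blk H' a b -> Pr H = Pr H'.
  move=> H H' e; rewrite !PrE; apply/matrixP => k l; rewrite !mxE.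
  case: (eqVneq (bi k) a) => [ha|]; last by rewrite !scale0r.
  case: (eqVneq (bi l) b) => [hb|]; last by rewrite !scale0r !scaler0.
  by rewrite (@entry_blk _ _ _ H) (@entry_blk _ _ _ H') ha hb e.
have blk_Pr : forall H, blk (Pr H) a b = blk H a b.
  move=> H; apply/matrixP => i j; rewrite !blkE PrE mxE !bi_rk !eqxx.
  by rewrite !scale1r.
have PrB : forall H H', Pr (H - H') = Pr H - Pr H'.
  move=> H H'; rewrite !PrE; apply/matrixP => k l; rewrite !mxE.
  by rewrite !scalerBr.
have [c2 [c20 hc]] := hc2 _ n0.
have [Nge0 [Ndef _]] := hnorm _ n0.
pose Kc := c2 * cmxnorm P0 * cmxnorm P1.
have cm0 : forall P : 'M[R[i]]_(bsz m s), 0 <= cmxnorm P.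
  by move=> P; apply: sumr_ge0 => i _; apply: sumr_ge0 => j _.
have Kc0 : 0 <= Kc by rewrite /Kc !mulr_ge0 // ltW.
pose G := Pr F - Pr (A K0).
have small : forall e, 0 < e -> N _ G < e.
  move=> e e0.
  have e'0 : 0 < e / (Kc + 1) by rewrite divr_gt0 // ltr_wpDl.
  have [K hK] := hlim _ e'0.
  pose k := maxn K K0.
  have -> : G = Pr (F - A k).
    rewrite PrB /G; congr (_ - _); apply: Pr_blk.
    by rewrite !hA // leq_maxr.
  apply: (le_lt_trans (hc _ _ _)).
  have -> : c2 * cmxnorm P0 * N _ (F - A k) * cmxnorm P1 = Kc * N _ (F - A k).
    by rewrite /Kc mulrAC.
  apply: (le_lt_trans (y := Kc * (e / (Kc + 1)))).
    by rewrite ler_wpM2l // ltW // hK // leq_maxl.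
  have Kn : Kc + 1 != 0 by rewrite gt_eqF // ltr_wpDl.
  rewrite -{2}(divfK Kn e).
  by rewrite [_ / _ * _]mulrC ltr_pM2r // ltrDl.
have G0 : G = 0.
  apply: Ndef; apply/eqP; apply: contraT => nz.
  have : 0 < N _ G by rewrite lt0r nz Nge0.
  by move=> /small; rewrite ltxx.
have e : Pr F = Pr (A K0) by apply/eqP; rewrite -subr_eq0; apply/eqP; exact: G0.
by rewrite -blk_Pr e blk_Pr hA.
Qed.

Local Open Scope classical_set_scope.

Lemma blk_sum (U : zmodType) m s k (F : 'I_k -> 'M[U]_(bsz m s)) a b :
  blk (\sum_(j < k) F j) a b = \sum_(j < k) blk (F j) a b.
Proof. exact: submxblock_sum. Qed.

Theorem theorem7p9 (R : realType) (V : lmodType R[i])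
  (W : completeNormedModType R[i]) (N : forall n, 'M[W]_n -> R[i])
  (Omega : ncsubset V) (f : forall n, 'M[V]_n -> 'M[W]_n)
  (s : nat) (Y : 'M[V]_s) (Gamma : ncsubset V)
  (fl : forall l : nat, ('I_l -> 'M[V]_s) -> 'M[W]_s) :
  is_ncset Omega -> finitely_open Omega ->
  admissible N ->
  is_ncfun Omega f -> G_differentiable Omega f N ->
  (0 < s)%N -> Omega s Y ->
  finitely_open Gamma -> (forall n, Gamma n `<=` Omega n) ->
  (forall m, (0 < m)%N -> Gamma (bsz m s) (dsumn m Y)) ->
  (forall l, multilinear (fl l)) ->
  (forall m (X : 'M[V]_(bsz m s)), (0 < m)%N -> Gamma (bsz m s) X ->
     forall eps : R[i], 0 < eps -> exists K : nat, forall k, (K <= k)%N ->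
       N (bsz m s) (f (bsz m s) X -
         \sum_(l < k) odot_apply (X - dsumn m Y) (fl l)) < eps) ->
  forall (l : nat) (Z : 'I_l -> 'M[V]_s),
    (exists (S : 'M[R[i]]_(bsz l.+1 s)) (X : 'M[V]_(bsz l.+1 s)),
        S \in unitmx /\ Omega (bsz l.+1 s) X /\ bidiag Y Z = simil S X) /\
    (forall (S : 'M[R[i]]_(bsz l.+1 s)) (X : 'M[V]_(bsz l.+1 s)),
        S \in unitmx -> Omega (bsz l.+1 s) X -> bidiag Y Z = simil S X ->
        fl l Z = blk (simil S (f (bsz l.+1 s) X)) ord0 ord_max).
Proof.
move=> _ _ adm ncf _ s0 _ foG GO GY mlf ser l Z.
have n0 : (0 < bsz l.+1 s)%N.
  by rewrite /bsz sum_nat_const card_ord muln_gt0 s0.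
pose E := bidiag 0 Z.
have [eps [eps0 heps]] := foG _ (dsumn l.+1 Y) 1%N (fun=> E) n0 (GY _ (ltn0Sn l)).
pose t := eps / 2.
have t0 : 0 < t by rewrite divr_gt0.
have tn0 : t != 0 by rewrite gt_eqF.
pose Bt := dsumn l.+1 Y + scalemxl t E.
have GBt : Gamma _ Bt.
  have := heps (fun=> t); rewrite big_ord1; apply => _.
  rewrite gtr0_norm //; have := midf_lt eps0; rewrite add0r; by case.
pose d := fun k : 'I_(bsz l.+1 s) => (t^-1) ^+ (bi k : nat).
have dnz : forall k, d k != 0 by move=> k; rewrite expf_neq0 // invr_eq0.
have hB : simil (dmx d) (bidiag Y Z) = Bt by exact: bidiag_scale.
have [ud _] := @dmx_unit R _ d dnz.
split.
  exists (dmx (fun k => (d k)^-1)), Bt; split.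
    have dinz : forall k, (d k)^-1 != 0 by move=> k; rewrite invr_eq0.
    by have [] := @dmx_unit R _ (fun k => (d k)^-1) dinz.
  split; first exact: GO.
  rewrite -hB simil_dmx; last by move=> k; rewrite invr_eq0.
  rewrite simil_dmx //; apply/matrixP => k k'; rewrite !mxE scalerA.
  have -> : (d k)^-1 / (d k')^-1 * (d k / d k') = 1.
    by have := dnz k; have := dnz k'; move=> h1 h2; field; rewrite h1 h2.
  by rewrite scale1r.
move=> S X uS OX eB.
have uDS : dmx d *m S \in unitmx by rewrite unitmx_mul ud uS.
have eBt : Bt = simil (dmx d *m S) X by rewrite -hB eB simil_comp.
have fBt : f _ Bt = simil (dmx d) (simil S (f _ X)).
  rewrite simil_comp // eBt; apply: (ncf.2 _ _ _ n0 uDS OX).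
  by rewrite -eBt; exact: GO.
have hblk : blk (f _ Bt) ord0 ord_max =
    scalemxl (t ^+ l) (blk (simil S (f _ X)) ord0 ord_max).
  rewrite fBt simil_dmx //; apply/matrixP => i j.
  rewrite blkE mxE [RHS]mxE blkE; congr (_ *: _).
  rewrite /d !bi_rk /= expr0 mul1r exprVn invrK.
  by [].
have hser : blk (f _ Bt) ord0 ord_max = scalemxl (t ^+ l) (fl l Z).
  apply: (@limit_blk _ _ N _ _ _
    (fun k => \sum_(j < k) odot_apply (Bt - dsumn l.+1 Y) (fl j)) _ _ _ l.+1 adm n0).
    by move=> e e0; exact: ser.
  move=> k hk.
  have -> : Bt - dsumn l.+1 Y = scalemxl t E by rewrite /Bt addrAC subrr add0r.
  rewrite blk_sum /E.
  rewrite (bigD1 (Ordinal hk)) //= odot_blk // eqxx big1 ?addr0 //.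
  move=> j nj; rewrite odot_blk //.
  have -> : (val j == l) = false.
    by apply/negbTE; apply: contra nj => /eqP e; apply/eqP/val_inj.
  by [].
have : scalemxl (t ^+ l)^-1 (scalemxl (t ^+ l) (fl l Z)) =
       scalemxl (t ^+ l)^-1 (scalemxl (t ^+ l) (blk (simil S (f _ X)) ord0 ord_max)).
  by rewrite -hser hblk.
by rewrite !scalemxlA mulVf ?expf_neq0 // !scalemxl1.
Qed.
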